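(* Let $\alpha\in(0,1)$ and $n\in\mathbb{N}$, and let $G$ be a graph on $n$ vertices with $\delta(G)\geq \alpha n$. If $u,v$ are vertices of $G$ such that there exists a walk of even length between $u$ and $v$, then there exists a walk of even length at most $4/\alpha$ between $u$ and $v$.
   Context: Graphs are finite and simple; $\delta(G)$ is the minimum degree. The length of a walk is its number of edges. *)

(* Defs.v *)
From HB Require Import structures.
From mathcomp Require Import all_boot all_order all_algebra.
From mathcomp Require Import all_reals.
Set Implicit Arguments. Unset Strict Implicit. Unset Printing Implicit Defensive.

Definition simple_graph (T : finType) (e : rel T) : Prop :=
  symmetric e /\ irreflexive e.

Definition deg (T : finType) (e : rel T) (x : T) : nat := #|[set y | e x y]|.

(* A walk from u to v of length k: a sequence p of k vertices such that
   u :: p is an e-path ending at v (length = number of edges = size p). *)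
Definition walk_of_length (T : finType) (e : rel T) (u v : T) (k : nat) : Prop :=
  exists p : seq T, [/\ path e u p, last u p = v & size p = k].

(* Main.v *)
Require Import Defs.
From HB Require Import structures.
From mathcomp Require Import all_boot all_order all_algebra.
From mathcomp Require Import all_reals.
From mathcomp Require Import zify ring lra.
From Stdlib Require Import Classical.
Import Order.TTheory GRing.Theory Num.Theory.

Section W.
Variables (T : finType) (e : rel T).

Lemma walk_cat u w v k1 k2 : walk_of_length e u w k1 -> walk_of_length e w v k2 ->
  walk_of_length e u v (k1 + k2).
Proof.
move=> [p [P1 L1 S1]] [q [P2 L2 S2]]; exists (p ++ q); split.
- by rewrite cat_path P1 L1 P2.
- by rewrite last_cat L1.
- by rewrite size_cat S1 S2.
Qed.

Lemma walk_pre u p i : path e u p -> walk_of_length e u (last u (take i p)) i /\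
  walk_of_length e (last u (take i p)) (last u p) (size p - i) \/ size p < i.
Proof.
move=> P; case: (leqP i (size p)) => Hi; last by right.
left; rewrite -{1}(cat_take_drop i p) cat_path in P; case/andP: P => P1 P2.
split.
- by exists (take i p); split => //; rewrite size_take_min; apply/minn_idPl.
- exists (drop i p); split => //; last by rewrite size_drop.
  by rewrite -last_cat cat_take_drop.
Qed.

Lemma walk2 x z y : e x z -> e z y -> walk_of_length e x y 2.
Proof. by move=> a b; exists [:: z; y]; rewrite /= a b. Qed.

Lemma count_disj (F : nat -> {set T}) n :
  (forall a b, a < b -> b < n -> [disjoint F a & F b]) ->
  \sum_(a < n) #|F a| = #|\bigcup_(a < n) F a|.
Proof.
elim: n => [|n IH] H.
  by rewrite !big_ord0 cards0.
rewrite big_ord_recr /=.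
have -> : \bigcup_(a < n.+1) F a = \bigcup_(a < n) F a :|: F n by rewrite big_ord_recr.
rewrite IH; last by move=> a b ab bn; apply: H => //; apply: ltnW.
rewrite setUC cardsU.
have D : [disjoint F n & \bigcup_(a < n) F a].
  apply: bigcup_disjoint => i _; rewrite disjoint_sym.
  exact: H.
by rewrite (disjoint_setI0 D) cards0 subn0 addnC.
Qed.
End W.
Arguments walk_cat {T e u w v k1 k2}.
Arguments walk2 {T e x z y}.
Arguments count_disj {T F n}.

Local Open Scope ring_scope.

Theorem proposition4p5 (R : realType) (alpha : R) (T : finType) (e : rel T)
  (Hg : simple_graph e) (Ha0 : 0 < alpha) (Ha1 : alpha < 1)
  (Hdeg : forall x : T, alpha * (#|T|)%:R <= (deg e x)%:R)
  (u v : T) :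
  (exists k : nat, ~~ odd k /\ walk_of_length e u v k) ->
  exists k : nat, [/\ ~~ odd k, k%:R <= 4 / alpha & walk_of_length e u v k].
Proof.
move=> [k [ek wk]]; elim/ltn_ind: k ek wk => k IH ek wk.
have [small|big] := boolP (k%:R <= 4 / alpha); first by exists k.
case: (classic (exists k : nat, [/\ ~~ odd k, k%:R <= 4 / alpha & walk_of_length e u v k])) => // NG.
exfalso.
have Hmin : forall k', (k' < k)%N -> ~~ odd k' -> walk_of_length e u v k' -> False.
  by move=> k' lt ek' w'; apply: NG; apply: IH lt ek' w'.
case: wk => p [Pp Lp Sp].
pose w := fun i => last u (take i p).
pose m := (k %/ 4)%N.
pose F := fun a => [set y | e (w (4 * a)%N) y].
have [h Hh] : exists h, k = (2 * h)%N.
  exists k./2; have := odd_double_half k; rewrite (negbTE ek) -muln2 /=; lia.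
have Hd : forall a b, (a < b)%N -> (b < m.+1)%N -> [disjoint F a & F b].
  move=> a b ab bm; rewrite -setI_eq0; apply/eqP/setP => y; rewrite !inE.
  apply/negbTE/negP => /andP[ea eb].
  have kb : (4 * b <= k)%N by rewrite /m in bm; lia.
  have [[W1 _]|] := @walk_pre T e u p (4 * a) Pp; last by rewrite Sp; lia.
  have [[_ W2]|] := @walk_pre T e u p (4 * b) Pp; last by rewrite Sp; lia.
  rewrite Lp Sp in W2.
  have eb' : e y (w (4 * b)%N) by rewrite (Hg.1 y).
  have W := walk_cat (walk_cat W1 (walk2 ea eb')) W2.
  apply: (Hmin _ _ _ W); first by lia.
  have -> : (4 * a + 2 + (k - 4 * b) = 2 * (2 * a + 1 + h - 2 * b))%N by lia.
  by rewrite oddM.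
have C := count_disj Hd.
have S : (\sum_(a < m.+1) #|F a| <= #|T|)%N by rewrite C; apply: max_card.
have Tpos : (0 < #|T|)%N by apply/card_gt0P; exists u.
have RS : (m.+1)%:R * (alpha * #|T|%:R) <= #|T|%:R :> R.
  apply: (le_trans (y := (\sum_(a < m.+1) #|F a|)%:R)); last by rewrite ler_nat.
  have -> : (m.+1)%:R * (alpha * #|T|%:R) = \sum_(a < m.+1) (alpha * #|T|%:R) :> R.
    by rewrite sumr_const card_ord mulr_natl.
  rewrite natr_sum; apply: ler_sum => a _; exact: Hdeg.
have Np : 0 < #|T|%:R :> R by rewrite ltr0n.
have Ma : (m.+1)%:R * alpha <= 1 :> R.
  by rewrite -(ler_pM2r Np) mul1r -mulrA.
have km : (k <= 4 * m.+1)%N by rewrite /m; lia.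
have kmR : k%:R <= 4 * (m.+1)%:R :> R.
  by rewrite -natrM ler_nat; lia.
rewrite -ltNge ltr_pdivrMr // in big.
nra.
Qed.
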